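(* Let $G$ be a finite abstract simplicial complex with connection matrix $L$ and $g=L^{-1}$. Then for all $x,y\in G$, $$g(x,y)=\omega(x)\,\omega(y)\,\chi\big(W^+(x)\cap W^+(y)\big).$$
   Context: A finite abstract simplicial complex $G$ is a finite set of non-empty finite sets closed under taking non-empty subsets; its elements are simplices. For $x\in G$, $\omega(x)=(-1)^{|x|-1}$. The connection matrix $L$ has $L(x,y)=1$ if $x\cap y\neq\emptyset$ and $0$ otherwise. The star of $x$ is $W^+(x)=\{y\in G: x\subseteq y\}$. For any subset $A\subseteq G$ (not necessarily a complex), $\chi(A)=\sum_{y\in A}\omega(y)$. *)

(* Defs.v *)
From mathcomp Require Import all_boot all_order all_algebra.
Set Implicit Arguments. Unset Strict Implicit. Unset Printing Implicit Defensive.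
Import GRing.Theory Num.Theory.
Local Open Scope ring_scope.

Section Defs.
Variable V : finType.

Definition is_simplicial_complex (G : {set {set V}}) : Prop :=
  set0 \notin G /\
  forall x y : {set V}, x \in G -> y \subset x -> y != set0 -> y \in G.

Definition omega (x : {set V}) : int := (-1) ^+ (#|x|.-1).

Definition chi (A : {set {set V}}) : int := \sum_(y in A) omega y.

Definition star (G : {set {set V}}) (x : {set V}) : {set {set V}} :=
  [set y in G | x \subset y].

Definition connection_matrix (G : {set {set V}}) : 'M[int]_#|G| :=
  \matrix_(i < #|G|, j < #|G|)
    ((enum_val i :&: enum_val j != set0 :> {set V})%:R : int).

Definition green_formula (G : {set {set V}}) : 'M[int]_#|G| :=
  \matrix_(i < #|G|, j < #|G|)
    (omega (enum_val i) * omega (enum_val j)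
       * chi (star G (enum_val i) :&: star G (enum_val j))).
End Defs.

(* Main.v *)
Require Import Defs.
From mathcomp Require Import all_boot all_order all_algebra ring.
Set Implicit Arguments. Unset Strict Implicit. Unset Printing Implicit Defensive.
Import GRing.Theory Num.Theory.
Local Open Scope ring_scope.
Section Aux.
Variable V : finType.
Definition esg (w : {set V}) : int := (-1) ^+ #|w|.

Lemma toggle_sum (z x : {set V}) (a : V) : a \in x -> a \notin z ->
  \sum_(w : {set V} | (z \subset w) && (w \subset x)) esg w = 0.
Proof.
move=> ax az.
pose h (w : {set V}) := if a \in w then w :\ a else a |: w.
have hK : involutive h.
  move=> w; rewrite /h; case: (boolP (a \in w)) => aw.
    by rewrite !inE eqxx /= setD1K.
  by rewrite !inE eqxx /= setU1K.
set S := (\sum_(w | _) _).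
have : S = - S.
  rewrite {1}/S (reindex_inj (inv_inj hK)) /S -sumrN.
  apply: eq_big => w.
    rewrite /h; case: (boolP (a \in w)) => aw.
      congr andb; apply/subsetP/subsetP => H y; move: (H y); rewrite !inE;
        case: (y =P a) => [->|_] /=; rewrite ?(negPf az) ?aw ?ax //; auto.
    congr andb; apply/subsetP/subsetP => H y; move: (H y); rewrite !inE;
      case: (y =P a) => [->|_] /=; rewrite ?(negPf az) ?aw ?ax //; auto.
  move=> _; rewrite /h /esg; case: (boolP (a \in w)) => aw.
    by rewrite [in RHS](cardsD1 a w) aw exprS mulN1r opprK.
  by rewrite cardsU1 aw exprS mulN1r.
move/eqP; rewrite -addr_eq0 -mulr2n mulrn_eq0 /=.
by move/eqP.
Qed.
Lemma sum_ind (P : pred {set V}) (F : {set V} -> int) :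
  \sum_(i | P i) F i = \sum_i (P i)%:R * F i.
Proof. by rewrite big_mkcond; apply: eq_bigr => i _; case: (P i); rewrite ?mul1r ?mul0r. Qed.

Lemma sumB (z x : {set V}) :
  \sum_(w : {set V} | (z \subset w) && (w \subset x)) esg w = if z == x then esg x else 0.
Proof.
case: eqP => [->|nzx].
  rewrite (eq_bigl (pred1 x)) ?big_pred1_eq // => w /=.
  by rewrite eq_sym eqEsubset andbC.
case: (boolP (x \subset z)) => xz.
  rewrite big_pred0 // => w; apply/negP => /andP [zw wx].
  by apply: nzx; apply/eqP; rewrite eqEsubset xz (subset_trans zw wx).
case/subsetPn: xz => a ax az.
exact: toggle_sum ax az.
Qed.

Lemma sumA (w : {set V}) : \sum_(y : {set V} | y \subset w) esg y = (w == set0)%:R.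
Proof.
have -> : \sum_(y : {set V} | y \subset w) esg y = \sum_(y : {set V} | (set0 \subset y) && (y \subset w)) esg y.
  by apply: eq_bigl => y; rewrite sub0set.
by rewrite sumB eq_sym; case: eqP => [->|]; rewrite /esg ?cards0 ?expr0.
Qed.
Lemma om (y : {set V}) : y != set0 -> omega y = - esg y.
Proof.
rewrite -card_gt0 /omega /esg; case: #|y| => // n _.
by rewrite exprS mulN1r opprK.
Qed.

Lemma sumC (w x : {set V}) : w != set0 ->
  \sum_(y : {set V} | y \subset w) (x :&: y != set0)%:R * esg y = - (w \subset x)%:R.
Proof.
move=> wn.
have E := sumA w; rewrite (negPf wn) (bigID (fun y => x :&: y != set0)) /= in E.
have E2 : \sum_(y : {set V} | (y \subset w) && ~~ (x :&: y != set0)) esg y = (w \subset x)%:R.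
  rewrite -setD_eq0 -sumA; apply: eq_bigl => y.
  by rewrite subsetD negbK setI_eq0 disjoint_sym.
rewrite E2 in E.
have -> : \sum_(y : {set V} | y \subset w) (x :&: y != set0)%:R * esg y =
   \sum_(y : {set V} | (y \subset w) && (x :&: y != set0)) esg y.
  rewrite big_mkcondr /=; apply: eq_bigr => y _; case: (_ != _); rewrite ?mul1r ?mul0r //.
by apply/eqP; rewrite -addr_eq0 E.
Qed.
Lemma esg2 (z : {set V}) : esg z * esg z = 1.
Proof. by rewrite /esg -expr2 sqrr_sign. Qed.

Lemma entry (G : {set {set V}}) (HG : is_simplicial_complex G) x z :
  x \in G -> z \in G ->
  \sum_(y in G) ((x :&: y != set0)%:R * (omega y * omega z * chi (star G y :&: star G z)))
   = (z == x)%:R :> int.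
Proof.
move=> xG zG; case: HG => G0 Gcl.
have nz y : y \in G -> y != set0.
  by move=> yG; apply/eqP => E; rewrite -E yG in G0.
have chiE y : chi (star G y :&: star G z) =
    \sum_(w : {set V}) ((w \in G) && (y \subset w) && (z \subset w))%:R * omega w.
  rewrite /chi sum_ind; apply: eq_bigr => w _; rewrite /star !inE.
  by case: (w \in G) (y \subset w) (z \subset w) => [] [] [].
have step2 : \sum_(y in G) ((x :&: y != set0)%:R * (omega y * omega z * chi (star G y :&: star G z)))
  = \sum_(w : {set V}) ((w \in G) && (z \subset w))%:R * (omega z * omega w) *
       - \sum_(y : {set V} | y \subset w) (x :&: y != set0)%:R * esg y.
  rewrite sum_ind.
  under [RHS]eq_bigr => w _ do rewrite sum_ind -sumrN mulr_sumr.
  rewrite [RHS]exchange_big /=; apply: eq_bigr => y _.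
  rewrite chiE !mulr_sumr; apply: eq_bigr => w _.
  case xy: (x :&: y != set0); last by rewrite /= !mul0r mulr0 mulr0 oppr0 mulr0.
  have yn : y != set0.
    by apply: contraTneq xy => ->; rewrite setI0 eqxx.
  rewrite (om yn).
  case wG: (w \in G); case yw: (y \subset w); case zw: (z \subset w); rewrite /=;
    try (rewrite (Gcl w y wG yw yn) /=); ring.
rewrite step2.
have step3 : \sum_(w : {set V}) ((w \in G) && (z \subset w))%:R * (omega z * omega w) *
       - \sum_(y : {set V} | y \subset w) (x :&: y != set0)%:R * esg y
     = \sum_(w : {set V}) ((z \subset w) && (w \subset x))%:R * (omega z * - esg w).
  apply: eq_bigr => w _.
  case wG: (w \in G); last first.
    rewrite /= mul0r mul0r.
    case zw: (z \subset w); case wx: (w \subset x); rewrite /= ?mul0r //.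
    have wn : w != set0.
      by apply: contraTneq zw => ->; rewrite subset0 (nz z zG).
    by rewrite (Gcl x w xG wx wn) in wG.
  rewrite sumC ?nz // opprK (om (nz w wG)) /=.
  by case: (z \subset w) (w \subset x) => [] []; rewrite /= ?mulr1n ?mulr0n ?mul1r ?mulr1 ?mul0r ?mulr0.
rewrite step3 -sum_ind -mulr_sumr sumrN sumB (om (nz z zG)).
case: eqP => [->|]; last by move=> _; rewrite oppr0 mulr0.
by rewrite mulrNN esg2 ?eqxx.
Qed.
End Aux.

Theorem theorem4 (V : finType) (G : {set {set V}}) :
  is_simplicial_complex G ->
  connection_matrix G \in unitmx /\
  invmx (connection_matrix G) = green_formula G.
Proof.
move=> HG.
set L := connection_matrix G; set M := green_formula G.
have LM : L *m M = 1%:M.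
  apply/matrixP => i k; rewrite !mxE.
  under eq_bigr => j _ do rewrite !mxE.
  rewrite -(big_enum_val (fun y => (enum_val i :&: y != set0)%:R * (omega y * omega (enum_val k) * chi (star G y :&: star G (enum_val k))))).
  by rewrite entry ?enum_valP // (inj_eq enum_val_inj) eq_sym.
have [Lu _] := mulmx1_unit LM.
split=> //.
by rewrite -[invmx L]mulmx1 -LM mulmxA mulVmx // mul1mx.
Qed.
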